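(* Let $\mathfrak g$ be of type $A_n$ and $\lambda=\sum_{i=1}^n r_i\omega_i\in P^+$. Define $\lambda^1,\lambda^2$ as follows: if all $r_i$ are even, $\lambda^1=\lambda^2=\lambda/2$... more precisely $\lambda^1=\lambda^2=\sum_i (r_i/2)\omega_i$; otherwise let $i_0<i_1<\dots<i_p$ be the indices $i$ with $r_i$ odd, $I_+=I\setminus\{i_0,\dots,i_p\}$, and set $$\lambda^1=\sum_{s=0}^p\frac{r_{i_s}+(-1)^s}{2}\,\omega_{i_s}+\sum_{i\in I_+}\frac{r_i}{2}\,\omega_i,\qquad\lambda^2=\lambda-\lambda^1.$$ Let $\boldsymbol\lambda_{\max}=(\lambda^1,\lambda^2)\in P^+(\lambda,2)$. Then either $\lambda^1=\lambda^2$ or $\lambda^2=\lambda^1-w^{-1}\omega_i$ for some $w\in W$ and $i\in I$. In either case $\boldsymbol\lambda_{\max}$ is the unique maximal element of $P^+(\lambda,2)/\!\sim$: every $\boldsymbol\mu\in P^+(\lambda,2)$ satisfies $\boldsymbol\mu\preceq\boldsymbol\lambda_{\max}$.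
   Context: $\mathfrak g=\mathfrak{sl}_{n+1}$ with simple roots indexed by $I=\{1,\dots,n\}$, fundamental weights $\omega_i$, positive roots $R^+$, coroots $h_\alpha$, Weyl group $W$, dominant integral weights $P^+$. $P^+(\lambda,2)=\{(\lambda_1,\lambda_2)\in(P^+)^2:\lambda_1+\lambda_2=\lambda\}$; $(\lambda_1,\lambda_2)\preceq(\mu_1,\mu_2)$ means $\min\{\lambda_1(h_\alpha),\lambda_2(h_\alpha)\}\le\min\{\mu_1(h_\alpha),\mu_2(h_\alpha)\}$ for all $\alpha\in R^+$; $\sim$ means equality of these minima for all $\alpha$. *)

(* Defs.v *)
(* Type A_n, g = sl_{n+1}, simple roots indexed by 'I_n
   (index k : 'I_n stands for the paper's index k+1). *)
From HB Require Import structures.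
From mathcomp Require Import all_boot all_order all_algebra.
Set Implicit Arguments. Unset Strict Implicit. Unset Printing Implicit Defensive.
Import Order.TTheory GRing.Theory Num.Theory.
Local Open Scope ring_scope.

(* Integral weights, in coordinates w.r.t. the fundamental weights:
   mu = \sum_k mu k * omega_k. *)
Definition weight (n : nat) := {ffun 'I_n -> int}.

Definition omega n (i : 'I_n) : weight n := [ffun k => ((k == i) : nat)%:Z].

Definition dominant n (mu : weight n) : bool := [forall k, 0 <= mu k].

Definition addw n (a b : weight n) : weight n := [ffun k => a k + b k].
Definition subw n (a b : weight n) : weight n := [ffun k => a k - b k].

(* Simple root alpha_j in fundamental-weight coordinates (column j of the
   Cartan matrix of A_n): 2 omega_j - omega_{j-1} - omega_{j+1}. *)
Definition alpha n (j : 'I_n) : weight n :=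
  [ffun k => if k == j then 2%:Z
             else if (k.+1 == j :> nat) || (j.+1 == k :> nat) then -1 else 0].

(* Simple reflection s_j mu = mu - mu(h_j) alpha_j ; mu(h_j) = mu j. *)
Definition sref n (j : 'I_n) (mu : weight n) : weight n :=
  [ffun k => mu k - mu j * alpha j k].

(* An element w of the Weyl group W is a word [:: j1; ...; jm] in the simple
   reflections, w = s_{j1} ... s_{jm}; its action on weights: *)
Definition weyl_act n (w : seq 'I_n) (mu : weight n) : weight n :=
  foldr (@sref n) mu w.
Definition weyl_act_inv n (w : seq 'I_n) (mu : weight n) : weight n :=
  weyl_act (rev w) mu.

(* Positive roots of A_n: alpha_{i,j} = alpha_i + ... + alpha_j, i <= j, with
   coroot h_{alpha_{i,j}} = h_i + ... + h_j, so mu(h_alpha) = sum_{i<=k<=j} mu k. *)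
Definition hpair n (mu : weight n) (i j : 'I_n) : int :=
  \sum_(k < n | (i <= k <= j)%N) mu k.

Definition inP2 n (lam : weight n) (p : weight n * weight n) : bool :=
  [&& dominant p.1, dominant p.2 & addw p.1 p.2 == lam].

Definition preceq n (l m : weight n * weight n) : Prop :=
  forall i j : 'I_n, (i <= j)%N ->
    Num.min (hpair l.1 i j) (hpair l.2 i j) <= Num.min (hpair m.1 i j) (hpair m.2 i j).

Definition lam_of n (r : 'I_n -> nat) : weight n := [ffun k => (r k)%:Z].

(* For i with r_i odd, its position s in the increasing list i_0 < ... < i_p
   of odd indices = number of odd indices below i. *)
Definition odd_rank n (r : 'I_n -> nat) (i : 'I_n) : nat :=
  #|[set k : 'I_n | odd (r k) & (k < i)%N]|.

(* lambda^1: (r_{i_s} + (-1)^s)/2 on odd indices, r_i/2 on the others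
   (this also covers the case where all r_i are even). *)
Definition lam1 n (r : 'I_n -> nat) : weight n :=
  [ffun i => if odd (r i) then (((r i)%:Z + (-1) ^+ odd_rank r i) %/ 2)%Z
             else ((r i)%:Z %/ 2)%Z].

Definition lam2 n (r : 'I_n -> nat) : weight n := subw (lam_of r) (lam1 r).

(* Main.v *)
Require Import Defs.
From HB Require Import structures.
From mathcomp Require Import all_boot all_order all_algebra zify ring.
Import Order.TTheory GRing.Theory Num.Theory.
Local Open Scope ring_scope.

Section Aux.
Variable n : nat.
Implicit Types (d a b : weight n).

Definition Ps d (m : nat) : int := \sum_(k < n | (k < m)%N) d k.

Lemma Ps0 d : Ps d 0 = 0.
Proof. by apply: big1 => k; rewrite ltn0. Qed.

Lemma PsS d (k : 'I_n) : Ps d k.+1 = Ps d k + d k.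
Proof.
rewrite /Ps (bigD1 k) ?ltnSn //= addrC; congr (_ + _).
by apply: eq_bigl => i; rewrite ltnS ltn_neqAle andbC.
Qed.

Lemma PsB a b m : Ps (subw a b) m = Ps a m - Ps b m.
Proof. by rewrite /Ps -sumrB; apply: eq_bigr => k _; rewrite ffunE. Qed.

Lemma Psref (j : 'I_n) d m : Ps (sref j d) m = Ps d m - d j * Ps (alpha j) m.
Proof. by rewrite /Ps mulr_sumr -sumrB; apply: eq_bigr => k _; rewrite ffunE. Qed.

Lemma Palpha (j : 'I_n) m : (0 < j)%N -> (m <= n)%N ->
  Ps (alpha j) m = (m == j.+1)%:Z - (m == j)%:Z.
Proof.
move=> j0; elim: m => [|m IH] hm.
  rewrite Ps0.
  case: (nat_of_ord j) j0.
  done.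
  done.
rewrite (PsS _ (Ordinal hm)) /=.
rewrite (IH (ltnW hm)).
rewrite ffunE.
change (nat_of_ord (Ordinal hm)) with m.
have -> : (Ordinal hm == j) = (m == j) by [].
rewrite eqSS.
case: (ltngtP m j) => h.
- rewrite (ltn_eqF (ltn_trans h (ltnSn j))).
  have -> : (j.+1 == m) = false by apply: gtn_eqF; apply: ltn_trans h _.
  by case: (m.+1 == j).
- rewrite orbC eq_sym.
  have -> : (m.+1 == j) = false by apply: gtn_eqF; apply: ltn_trans h _.
  by case: (j.+1 == m).
- by subst m; rewrite eq_sym !eqn_leq ltnn leqnSn.
Qed.

Lemma hpair_Ps mu (i j : 'I_n) : (i <= j)%N -> hpair mu i j = Ps mu j.+1 - Ps mu i.
Proof.
move=> hij; rewrite /Ps (bigID (fun k : 'I_n => (k < i)%N)) /=.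
have -> : \sum_(k < n | (k < j.+1)%N && (k < i)%N) mu k = \sum_(k < n | (k < i)%N) mu k.
  by apply: eq_bigl => k; apply/idP/idP; lia.
rewrite addrC addrK /hpair; apply: eq_bigl => k; apply/idP/idP; lia.
Qed.

Lemma hpairB a b (i j : 'I_n) : hpair (subw a b) i j = hpair a i j - hpair b i j.
Proof. by rewrite /hpair -sumrB; apply: eq_bigr => k _; rewrite ffunE. Qed.

Lemma hpairD a b (i j : 'I_n) : hpair (addw a b) i j = hpair a i j + hpair b i j.
Proof. by rewrite /hpair -big_split; apply: eq_bigr => k _; rewrite ffunE. Qed.

Definition inS d := forall m, (m <= n)%N -> 0 <= Ps d m <= 1.

Definition Ms d : int := \sum_(m < n.+1) (n - m)%:Z * Ps d m.

Lemma sum_ind (k : nat) : (k <= n)%N ->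
  \sum_(m < n.+1) (n - m)%:Z * (m == k :> nat)%:Z = (n - k)%:Z.
Proof.
move=> hk; rewrite (bigD1 (Ordinal (hk : (k < n.+1)%N))) //= eqxx mulr1 big1 ?addr0 //.
move=> m hm; have -> : (m == k :> nat) = false.
  by apply/negbTE; apply: contra hm => /eqP h; apply/eqP/val_inj.
by rewrite mulr0.
Qed.

Lemma sref_inv (j : 'I_n) d : sref j (sref j d) = d.
Proof.
apply/ffunP => k; rewrite /sref /alpha !ffunE eqxx; ring.
Qed.

Lemma Ms_ge0 d : inS d -> 0 <= Ms d.
Proof.
move=> hS; apply: sumr_ge0 => m _; apply: mulr_ge0 => //.
by case/andP: (hS m (ltn_ord m)).
Qed.

Lemma step d (j : 'I_n) : inS d -> d j = -1 ->
  [/\ inS (sref j d), Ms (sref j d) = Ms d - 1 & sref j d j = 1].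
Proof.
move=> hS hj.
have h1 := hS j (ltnW (ltn_ord j)).
have h2 := hS j.+1 (ltn_ord j).
have hP := PsS d j.
rewrite hj in hP.
have hP0 : Ps d j = 1 /\ Ps d j.+1 = 0.
  move: h1 h2; rewrite hP.
  lia.
have j0 : (0 < j)%N.
  case: (posnP j) => // e.
  move: hP0; rewrite e Ps0.
  by case.
have key : forall m, (m <= n)%N -> Ps (sref j d) m = Ps d m + ((m == j.+1)%:Z - (m == j)%:Z).
  move=> m hm; rewrite Psref hj (Palpha j m j0 hm).
  ring.
split.
- move=> m hm; rewrite key //.
  case E1: (m == j.+1).
  + move/eqP: E1 => ->.
    rewrite (gtn_eqF (ltnSn j)).
    case: hP0 => _ ->.
    done.
  case E2: (m == j).
  + move/eqP: E2 => ->.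
    case: hP0 => -> _.
    done.
  rewrite subrr addr0.
  exact: hS m hm.
- rewrite /Ms.
  have -> : \sum_(m < n.+1) (n - m)%:Z * Ps (sref j d) m =
     \sum_(m < n.+1) ((n - m)%:Z * Ps d m + ((n - m)%:Z * (m == j.+1 :> nat)%:Z - (n - m)%:Z * (m == j :> nat)%:Z)).
    apply: eq_bigr => m _.
    rewrite (key m (ltn_ord m)).
    ring.
  rewrite big_split /= sumrB.
  rewrite (@sum_ind j.+1 (ltn_ord j)) (@sum_ind j (ltnW (ltn_ord j))).
  have -> : ((n - j.+1)%:Z - (n - j)%:Z) = -1 by have := ltn_ord j; lia.
  done.
- rewrite /sref /alpha !ffunE eqxx hj.
  ring.
Qed.


Lemma subwE a b k : subw a b k = a k - b k. Proof. by rewrite ffunE. Qed.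
Lemma addwE a b k : addw a b k = a k + b k. Proof. by rewrite ffunE. Qed.

Lemma Ps_mono d : (forall j, 0 <= d j) -> forall p q : nat, (p <= q)%N -> Ps d p <= Ps d q.
Proof.
move=> hd p q hab; rewrite /Ps [X in _ <= X](bigID (fun k : 'I_n => (k < p)%N)) /=.
have -> : \sum_(k < n | (k < q)%N && (k < p)%N) d k = \sum_(k < n | (k < p)%N) d k.
  by apply: eq_bigl => k; apply/idP/idP; lia.
by rewrite lerDl sumr_ge0.
Qed.

Lemma terminal d (k : 'I_n) : inS d -> (forall j, d j != -1) -> d k != 0 -> d = omega k.
Proof.
move=> hS hno hk.
have hd j : d j = Ps d j.+1 - Ps d j by rewrite PsS; ring.
have hb (j : nat) : (j <= n)%N -> 0 <= Ps d j <= 1 by apply: hS.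
have hnn j : 0 <= d j.
  have := hno j; have := hb j (ltnW (ltn_ord j)); have := hb j.+1 (ltn_ord j); rewrite (hd j).
  move=> h1 h2 /eqP h3; lia.
have hm := @Ps_mono d hnn.
have hk0 : Ps d k = 0 /\ Ps d k.+1 = 1.
  have := hnn k; have := hb k (ltnW (ltn_ord k)); have := hb k.+1 (ltn_ord k); move: hk; rewrite (hd k) => /eqP; lia.
apply/ffunP => m; rewrite ffunE.
case: (ltngtP m k) => h.
- have -> : (m == k) = false by apply/negbTE; rewrite -val_eqE /= ltn_eqF.
  have := hm m.+1 k h; have := hm m m.+1 (leqnSn m); have := hb m (ltnW (ltn_ord m)); rewrite hd; lia.
- have -> : (m == k) = false by apply/negbTE; rewrite -val_eqE /= gtn_eqF.
  have := hm k.+1 m h; have := hm m m.+1 (leqnSn m); have := hb m.+1 (ltn_ord m); rewrite hd; lia.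
- have -> : m = k by apply: val_inj.
  rewrite eqxx hd; lia.
Qed.

Lemma exist_word N d : inS d -> Ms d <= N%:Z -> (exists k, d k != 0) ->
  exists u i, weyl_act u (omega i) = d.
Proof.
elim: N d => [|N IH] d hS hM [k hk].
  case: (pickP (fun j => d j == -1)) => [j /eqP hj | hno].
    have [hS' hM' _] := step d j hS hj.
    have := Ms_ge0 (sref j d) hS'; rewrite hM'; lia.
  have hno' : forall x, d x != -1 by move=> x; rewrite hno. by exists [::], k; rewrite (terminal d k hS hno' hk).
case: (pickP (fun j => d j == -1)) => [j /eqP hj | hno].
  have [hS' hM' h1] := step d j hS hj.
  have [u [i hu]] : exists u i, weyl_act u (omega i) = sref j d.
    apply: (IH (sref j d) hS').
    rewrite hM'; lia.
    by exists j; rewrite h1.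
  by exists (j :: u), i; rewrite /= hu sref_inv.
have hno' : forall x, d x != -1 by move=> x; rewrite hno. by exists [::], k; rewrite (terminal d k hS hno' hk).
Qed.

End Aux.
Arguments Ps {n}. Arguments inS {n}. Arguments Ms {n}.

Section Spec.
Variable n : nat.
Variable r : 'I_n -> nat.

Definition cnt (m : nat) := #|[set k : 'I_n | odd (r k) & (k < m)%N]|.

Lemma sign_cases (s : nat) : (-1) ^+ s = 1 :> int \/ (-1) ^+ s = -1 :> int.
Proof. by rewrite -signr_odd; case: (odd s); [right|left]. Qed.

Lemma lam1_2 k : 2 * lam1 r k = (r k)%:Z + (odd (r k))%:Z * (-1) ^+ (cnt k).
Proof.
rewrite ffunE; set q := (r k)./2.
case: ifP => Ho.
  have hr : (r k = q.*2 + 1)%N by rewrite -{1}(odd_double_half (r k)) Ho addnC.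
  rewrite /cnt -/(odd_rank r k); have [->|->] := sign_cases (odd_rank r k).
    have -> : (r k)%:Z + 1 = (q.+1)%:Z * 2 by rewrite hr; lia.
    rewrite mulzK //; lia.
  have -> : (r k)%:Z + -1 = q%:Z * 2 by rewrite hr; lia.
  rewrite mulzK //; lia.
have hr : (r k = q.*2)%N by rewrite -{1}(odd_double_half (r k)) Ho.
have -> : (r k)%:Z = q%:Z * 2 by rewrite hr; lia.
rewrite mulzK //; lia.
Qed.

Definition D := subw (lam1 r) (lam2 r).

Lemma lam_ofE k : lam_of r k = (r k)%:Z. Proof. by rewrite ffunE. Qed.

Lemma DE k : D k = (odd (r k))%:Z * (-1) ^+ (cnt k).
Proof.
rewrite /D /lam2 !subwE lam_ofE.
have := lam1_2 k; move: (lam1 r k) => l; lia.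
Qed.

Lemma cntS (k : 'I_n) : cnt k.+1 = (cnt k + odd (r k))%N.
Proof.
rewrite /cnt; case Ho: (odd (r k)).
  have -> : [set x : 'I_n | odd (r x) & (x < k.+1)%N] =
            k |: [set x : 'I_n | odd (r x) & (x < k)%N].
    apply/setP => x; rewrite !inE ltnS leq_eqVlt.
    case: (eqVneq x k) => [->|hne].
      by rewrite Ho !eqxx.
    have -> : (x == k :> nat) = false by apply/negbTE.
    done.
  rewrite cardsU1 inE ltnn andbF addnC.
  done.
rewrite addn0; apply: eq_card => x; rewrite !inE ltnS leq_eqVlt.
case: (eqVneq x k) => [->|hne]; first by rewrite Ho.
have -> : (x == k :> nat) = false by apply/negbTE.
done.
Qed.

Lemma PsD m : (m <= n)%N -> Ps D m = (odd (cnt m))%:Z.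
Proof.
elim: m => [|m IH] hm.
  rewrite (@Ps0 _ D) /cnt (_ : #|_| = 0%N) //.
  by apply: eq_card0 => x; rewrite inE ltn0 andbF.
rewrite (@PsS _ D (Ordinal hm)) (IH (ltnW hm)) DE.
have -> : cnt m.+1 = cnt (Ordinal hm).+1 by [].
rewrite cntS -signr_odd.
change (nat_of_ord (Ordinal hm)) with m.
case: (odd (r _)); case E: (odd (cnt m)).
all: rewrite ?addn0 ?addn1 /= ?E.
all: rewrite ?expr0 ?expr1 /=; lia.
Qed.

Lemma inS_D : inS D.
Proof. move=> m hm; rewrite PsD //; case: (odd _); lia. Qed.

End Spec.

Theorem proposition5p3 (n : nat) (hn : (0 < n)%N) (r : 'I_n -> nat) :
  (lam1 r = lam2 r \/
   exists (w : seq 'I_n) (i : 'I_n),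
     lam2 r = subw (lam1 r) (weyl_act_inv w (omega i))) /\
  inP2 (lam_of r) (lam1 r, lam2 r) /\
  (forall mu : weight n * weight n, inP2 (lam_of r) mu ->
     preceq mu (lam1 r, lam2 r)).
Proof.
have hl2 k : lam2 r k = (r k)%:Z - lam1 r k by rewrite /lam2 subwE lam_ofE.
split.
  case: (pickP (fun k => D n r k != 0)) => [k hk | h0].
    right.
    have hM : Ms (D n r) <= (absz (Ms (D n r)))%:Z by lia.
    have [u [i hu]] := @exist_word n _ (D n r) (inS_D n r) hM (ex_intro _ k hk).
    exists (rev u), i; rewrite /weyl_act_inv revK hu /D.
    apply/ffunP => x; rewrite !subwE; ring.
  left; apply/ffunP => k.
  apply/eqP; rewrite -subr_eq0 -subwE.
  exact: negbFE (h0 k).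
have hb k : 0 <= lam1 r k /\ 0 <= lam2 r k.
  have := lam1_2 n r k; rewrite hl2.
  case Ho: (odd (r k)).
  + have : (0 < r k)%N by apply: odd_gt0.
    have [->|->] := sign_cases (cnt n r k); move=> *; lia.
  + move=> h; lia.
split.
  apply/and3P; split.
  - by apply/forallP => k; case: (hb k).
  - by apply/forallP => k; case: (hb k).
  - by apply/eqP/ffunP => k; rewrite addwE hl2 lam_ofE; ring.
move=> [m1 m2] /and3P [_ _ /eqP hsum] i j hij /=.
have hab : hpair (lam2 r) i j = hpair (lam_of r) i j - hpair (lam1 r) i j.
  by rewrite /lam2 hpairB.
have hce : hpair m1 i j + hpair m2 i j = hpair (lam_of r) i j by rewrite -hpairD hsum.
have hD : hpair (D n r) i j = hpair (lam1 r) i j - hpair (lam2 r) i j by rewrite hpairB.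
have hDb : -1 <= hpair (D n r) i j <= 1.
  rewrite (@hpair_Ps n (D n r) i j hij) (PsD n r _ (ltn_ord j)) (PsD n r _ (ltnW (ltn_ord i))).
  case: (odd _); case: (odd _); lia.
move: hab hce hD hDb.
move: (hpair m1 i j) (hpair m2 i j) (hpair (lam1 r) i j) (hpair (lam2 r) i j)
  (hpair (lam_of r) i j) (hpair (D n r) i j) => c e a b S dd *.
rewrite le_min !ge_min; apply/andP; split; apply/orP; lia.
Qed.
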